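(* Let $X$ be an integral regular projective curve of genus $g$ over $\mathbb{F}_q$ and $\mathbf{n}_{m-1}=(n_0,\dots,n_{m-1})$ a tuple of positive integers. Assume that the $\mathbf{n}_{m-1}$-derived alpha invariants $\alpha^{(\mathbf{n}_{m-1})}_X(\ell)$ ($\ell=0,\dots,g-1$) and the beta invariant $\beta^{(\mathbf{n}_{m-1})}_X$ are all strictly positive. Then for every positive integer $k$, $\widehat\zeta^{(\mathbf{n}_{m-1})}_X(k)>0$ and $\widehat v_k=\prod_{j=1}^k\widehat\zeta^{(\mathbf{n}_{m-1})}_X(j)>0$.
   Context: Let $\zeta_X(s)=\sum_{D\ge 0}N(D)^{-s}$ be the Artin zeta function of $X$ ($D$ running over effective divisors) and $\widehat\zeta_X(s)=q^{s(g-1)}\zeta_X(s)$ the complete Artin zeta function, a rational function of $q^{-s}$. Derived zeta functions are defined recursively. For the empty tuple $\mathbf{n}_{-1}=()$ put $q_{\mathbf{n}_{-1}}=q$, $T_{\mathbf{n}_{-1}}=q^{-s}$, $\widehat\zeta^{(\mathbf{n}_{-1})}_X=\widehat\zeta_X$. For a tuple $\mathbf{n}_m=(n_0,\dots,n_m)$ of positive integers ($m\ge 0$) put $\mathbf{n}_{m-1}=(n_0,\dots,n_{m-1})$, $q_{\mathbf{n}_m}=q^{n_0n_1\cdots n_m}$, $T_{\mathbf{n}_m}=q^{-n_0n_1\cdots n_m s}$. Writing $\widehat Z^{(\mathbf{n}_{m-1})}_X(T_{\mathbf{n}_{m-1}}):=\widehat\zeta^{(\mathbf{n}_{m-1})}_X(s)$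 (a rational function of $T_{\mathbf{n}_{m-1}}$), set $\widehat\zeta^{(\mathbf{n}_{m-1})}_X(1):=\operatorname{Res}_{T_{\mathbf{n}_{m-1}}=1}\widehat Z^{(\mathbf{n}_{m-1})}_X(T_{\mathbf{n}_{m-1}})$ and for integers $N\ge 1$, $\widehat v_N:=\prod_{k=1}^{N}\widehat\zeta^{(\mathbf{n}_{m-1})}_X(k)$. Then $$\widehat\zeta^{(\mathbf{n}_m)}_X(s)=q_{\mathbf{n}_{m-1}}^{\binom{n_m}{2}(g-1)}\sum_{a=1}^{n_m}\Biggl(\sum_{\substack{k_1,\dots,k_p>0\\k_1+\cdots+k_p=n_m-a}}\frac{\widehat v_{k_1}\cdots\widehat v_{k_p}}{\prod_{j=1}^{p-1}(1-q_{\mathbf{n}_{m-1}}^{k_j+k_{j+1}})}\cdot\frac{1}{1-q_{\mathbf{n}_{m-1}}^{n_ms-n_m+a+k_p}}\Biggr)\widehat\zeta^{(\mathbf{n}_{m-1})}_X(n_ms-n_m+a)\Biggl(\sum_{\substack{l_1,\dots,l_r>0\\l_1+\cdots+l_r=a-1}}\frac{1}{1-q_{\mathbf{n}_{m-1}}^{-n_ms+n_m-a+1+l_1}}\cdot\frac{\widehat v_{l_1}\cdots\widehat v_{l_r}}{\prod_{j=1}^{r-1}(1-q_{\mathbf{n}_{m-1}}^{l_j+l_{j+1}})}\Biggr),$$ where the inner sums run over ordered tuples of positive integers (of any length) with the indicated sum, and an inner sum over tuples summing to $0$ is defined to be $1$. (For $m=0$ this is the rank $n_0$ non-abelian zeta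 function.) For a tuple $\mathbf{n}$, with $Q=q_{\mathbf{n}}$, $T=T_{\mathbf{n}}$, the derived alpha invariants $\alpha^{(\mathbf{n})}_X(\ell)$ ($0\le\ell\le g-1$) and beta invariant $\beta^{(\mathbf{n})}_X$ are the numbers for which $$\widehat Z^{(\mathbf{n})}_X(T)=\sum_{\ell=0}^{g-2}\alpha^{(\mathbf{n})}_X(\ell)\bigl(T^{\ell-(g-1)}+Q^{(g-1)-\ell}T^{(g-1)-\ell}\bigr)+\alpha^{(\mathbf{n})}_X(g-1)+\frac{(Q-1)T\beta^{(\mathbf{n})}_X}{(1-T)(1-QT)}$$ (such a representation exists); in particular $\beta^{(\mathbf{n})}_X=\operatorname{Res}_{T=1}\widehat Z^{(\mathbf{n})}_X(T)$. *)

(* Defs.v *)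
From HB Require Import structures.
From mathcomp Require Import all_boot all_order all_algebra.
From mathcomp Require Import all_classical all_reals topology normedtype.
Set Implicit Arguments. Unset Strict Implicit. Unset Printing Implicit Defensive.
Import Order.TTheory GRing.Theory Num.Theory.
Import numFieldNormedType.Exports.
Local Open Scope classical_set_scope.
Local Open Scope ring_scope.

Definition derived_q (q : nat) (ns : seq nat) : nat :=
  (q ^ (\prod_(n <- ns) n))%N.

(* The right-hand side of the alpha/beta representation of the derived
   complete zeta function hat Z^{(n)}_X(T), with Q = q_n:
     sum_{l=0}^{g-2} alpha(l) (T^{l-(g-1)} + Q^{(g-1)-l} T^{(g-1)-l})
     + alpha(g-1) + (Q-1) T beta / ((1-T)(1-QT)).
   For g = 0 there are no alpha invariants and the constant term is absent. *)
Definition Zrep (R : realType) (g : nat) (Q : R) (alpha : nat -> R) (beta : R)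
  (T : R) : R :=
  \sum_(l < g.-1) alpha l * (T ^- (g.-1 - l) + (Q * T) ^+ (g.-1 - l))
  + (if g is 0 then 0 else alpha g.-1)
  + (Q - 1) * T * beta / ((1 - T) * (1 - Q * T)).

Definition residue_at1 (R : realType) (Z : R -> R) : R :=
  lim ((fun T => (T - 1) * Z T) @ (1 : R)^').

(* hat zeta(k) for an integer k >= 1, where T = Q^{-s}:
   hat zeta(1) := Res_{T=1} hat Z(T), and hat zeta(k) := hat Z(Q^{-k}) for k >= 2. *)
Definition zeta_hat_val (R : realType) (Q : R) (Z : R -> R) (k : nat) : R :=
  if k == 1%N then residue_at1 Z else Z (Q ^- k).

Definition v_hat (R : realType) (Q : R) (Z : R -> R) (N : nat) : R :=
  \prod_(1 <= k < N.+1) zeta_hat_val Q Z k.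

(* Main.v *)
Require Import Defs.
From HB Require Import structures.
From mathcomp Require Import all_boot all_order all_algebra.
From mathcomp Require Import all_classical all_reals topology normedtype.
From mathcomp Require Import ring lra.
Import Order.TTheory GRing.Theory Num.Theory.
Import numFieldNormedType.Exports.
Local Open Scope ring_scope.
Local Open Scope classical_set_scope.
Lemma gt1_exp (m n : nat) : (0 < n)%N -> (1 < m)%N -> (1 < m ^ n)%N.
Proof.
case: n => // n _ hm; rewrite expnS.
have h : (0 < m ^ n)%N by rewrite expn_gt0 (ltnW hm).
by apply: (leq_trans hm); rewrite leq_pmulr.
Qed.

Lemma cvg_exp_fun (R : realType) (F : set_system R) {FF : Filter F} (f : R -> R) (a : R) (n : nat) :
  f @ F --> a -> (fun x => f x ^+ n) @ F --> (a ^+ n : R).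
Proof.
move=> hf; elim: n => [|n IH].
  rewrite expr0; under eq_fun do rewrite expr0; exact: cvg_cst.
rewrite exprS; under eq_fun do rewrite exprS; exact: cvgM.
Qed.

Lemma cvg_sum_fun (R : realType) (F : set_system R) {FF : Filter F}
   (f : nat -> R -> R) (a : nat -> R) n :
  (forall i, f i @ F --> a i) -> (fun x => \sum_(i < n) f i x) @ F --> \sum_(i < n) a i.
Proof.
move=> hf; elim: n => [|n IH].
  rewrite big_ord0; under eq_fun do rewrite big_ord0; exact: cvg_cst.
rewrite big_ord_recr; under eq_fun do rewrite big_ord_recr; exact: cvgD.
Qed.

Section Comb.
Context (R : realType) (F : set_system R) {FF : Filter F}.
Lemma cvgM' (f g : R -> R) (a b : R) : f @ F --> a -> g @ F --> b ->
  (fun x => f x * g x) @ F --> a * b.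
Proof. exact: cvgM. Qed.
Lemma cvgD' (f g : R -> R) (a b : R) : f @ F --> a -> g @ F --> b ->
  (fun x => f x + g x) @ F --> a + b.
Proof. exact: cvgD. Qed.
Lemma cvgB' (f g : R -> R) (a b : R) : f @ F --> a -> g @ F --> b ->
  (fun x => f x - g x) @ F --> a - b.
Proof. exact: cvgB. Qed.
Lemma cvgV' (f : R -> R) (a : R) : a != 0 -> f @ F --> a ->
  (fun x => (f x)^-1) @ F --> a^-1.
Proof. exact: cvgV. Qed.
Lemma cvgMdiv' (f g : R -> R) (a b : R) : b != 0 -> f @ F --> a -> g @ F --> b ->
  (fun x => f x / g x) @ F --> a / b.
Proof. by move=> ? ? ?; apply: cvgM' => //; apply: cvgV'. Qed.
End Comb.
Lemma res_beta (R : realType) (Q : R) (hQ : 2 <= Q) (g : nat)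
  (Z : R -> R) (alpha : nat -> R) (beta : R)
  (hZ : forall T : R, T != 0 -> T != 1 -> Q * T != 1 ->
        Z T = Zrep g Q alpha beta T) :
  residue_at1 Z = beta.
Proof.
pose m l := (g.-1 - l)%N.
pose S T := \sum_(l < g.-1) alpha l * ((T ^+ m l)^-1 + Q ^+ m l * T ^+ m l).
pose c := if g is 0 then 0 else alpha g.-1.
pose h T := (T - 1) * (S T + c) + (Q - 1) * T * beta / (Q * T - 1).
have hQ1 : Q - 1 != 0 by apply/lt0r_neq0; rewrite subr_gt0; apply: lt_le_trans hQ; rewrite ltr1n.
have hid : (fun T : R => T) @ (1:R) --> (1:R) by exact: cvg_id.
have hcv : h @ (1:R) --> (1 - 1) * (S 1 + c) + (Q - 1) * 1 * beta / (Q * 1 - 1).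
  rewrite /h; apply: cvgD'.
    apply: cvgM'; first exact: cvgB' hid (cvg_cst _).
    apply: cvgD'; last exact: cvg_cst.
    rewrite /S; apply: (@cvg_sum_fun _ _ _ (fun l T => alpha l * ((T ^+ m l)^-1 + Q ^+ m l * T ^+ m l)) (fun l => alpha l * ((1 ^+ m l)^-1 + Q ^+ m l * 1 ^+ m l))) => l.
    apply: cvgM'; first exact: cvg_cst.
    apply: cvgD'.
      apply: cvgV'; first by rewrite expr1n oner_neq0.
      exact: cvg_exp_fun.
    apply: cvgM'; first exact: cvg_cst.
    exact: cvg_exp_fun.
  apply: cvgMdiv'; first by rewrite mulr1.
    apply: cvgM'; last exact: cvg_cst.
    apply: cvgM'; first exact: cvg_cst.
    exact: hid.
  apply: cvgB'; last exact: cvg_cst.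
  apply: cvgM'; first exact: cvg_cst.
  exact: hid.
have E : (1 - 1) * (S 1 + c) + (Q - 1) * 1 * beta / (Q * 1 - 1) = beta.
  rewrite subrr mul0r add0r mulr1 mulr1; field; exact: hQ1.
rewrite E in hcv.
have hcv2 : h @ (1:R)^' --> beta.
  apply: cvg_within_filter; exact: hcv.
rewrite /residue_at1; apply: cvg_lim => //.
apply: cvg_trans hcv2; apply: near_eq_cvg; near=> T.
have T1 : T != 1 by near: T; exact: nbhs_dnbhs_neq.
have Th : `|1 - T| < 1/2.
  near: T; apply: nbhs_dnbhs.
  have hh : (0:R) < 1/2 by rewrite divr_gt0 ?ltr0n.
  exact: (cvgr_dist_lt _ _ hid _ hh).
have Tg : 1/2 < T by have := ler_norm (1 - T); lra.
have T0 : T != 0 by apply/eqP => e; rewrite e in Tg; lra.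
have QT : Q * T != 1.
  apply/eqP => e; have : 1 < Q * T by nra.
  by rewrite e ltxx.
rewrite hZ // /h /Zrep [in RHS]mulrDr; congr (_ + _).
  congr (_ * (_ + _)).
  apply: eq_bigr => l _; by rewrite exprMn.
have h1T : 1 - T != 0 by rewrite subr_eq0 eq_sym.
have h1QT : 1 - Q * T != 0 by rewrite subr_eq0 eq_sym.
have hQT1 : Q * T - 1 != 0 by rewrite subr_eq0.
field; rewrite ?h1T ?h1QT ?hQT1 //.
Unshelve. all: by end_near.
Qed.

Lemma zeta_pos (R : realType) (Q : R) (hQ : 2 <= Q) (g : nat)
  (Z : R -> R) (alpha : nat -> R) (beta : R)
  (hZ : forall T : R, T != 0 -> T != 1 -> Q * T != 1 ->
        Z T = Zrep g Q alpha beta T)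
  (halpha : forall l : nat, (l < g)%N -> 0 < alpha l)
  (hbeta : 0 < beta) (k : nat) (hk : (0 < k)%N) :
  0 < zeta_hat_val Q Z k.
Proof.
rewrite /zeta_hat_val; case: eqP => [_|k1].
  by rewrite (@res_beta _ _ hQ _ _ _ _ hZ).
have Q1 : 1 < Q by apply: lt_le_trans hQ; rewrite ltr1n.
have Q0 : 0 < Q by apply: lt_trans Q1.
case: k hk k1 => [//|[//|k]] _ _.
set T := Q ^- k.+2.
have XG : 1 < Q ^+ k.+1 by rewrite exprn_egt1.
have T0 : 0 < T by rewrite invr_gt0 exprn_gt0.
have QTe : Q * T = (Q ^+ k.+1)^-1.
  by rewrite /T exprS invfM mulrA mulfV ?mul1r // gt_eqF.
have QT1 : Q * T < 1 by rewrite QTe invf_lt1 // (lt_trans ltr01).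
have QT0 : 0 < Q * T by rewrite mulr_gt0.
have T1 : T < 1 by nra.
have a1 : T != 0 by apply/eqP => e; rewrite e in T0; lra.
have a2 : T != 1 by apply/eqP => e; rewrite e in T1; lra.
have a3 : Q * T != 1 by apply/eqP => e; rewrite e in QT1; lra.
rewrite hZ //.
rewrite /Zrep.
have L : 0 < (Q - 1) * T * beta / ((1 - T) * (1 - Q * T)).
  apply: divr_gt0; first by rewrite !mulr_gt0 ?subr_gt0.
  by rewrite mulr_gt0 ?subr_gt0.
apply: (ltr_wpDl _ L).
apply: addr_ge0.
  apply: sumr_ge0 => l _; apply: mulr_ge0.
    apply: ltW; apply: halpha.
    exact: leq_trans (ltn_ord l) (leq_pred g).
  by rewrite addr_ge0 // ?exprn_ge0 ?invr_ge0 ?exprn_ge0 ?ltW.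
by case: g hZ halpha => [|g'] _ h //=; apply: ltW; apply: h.
Qed.

Theorem lemma2p9 (R : realType) (q : nat)
  (hq : exists p e : nat, [/\ prime p, (0 < e)%N & q = (p ^ e)%N])
  (g : nat) (ns : seq nat) (hns : all (fun n => (0 < n)%N) ns)
  (Z : R -> R) (alpha : nat -> R) (beta : R)
  (hZ : forall T : R, T != 0 -> T != 1 -> (derived_q q ns)%:R * T != 1 ->
        Z T = Zrep g (derived_q q ns)%:R alpha beta T)
  (halpha : forall l : nat, (l < g)%N -> 0 < alpha l)
  (hbeta : 0 < beta)
  (k : nat) (hk : (0 < k)%N) :
  0 < zeta_hat_val (derived_q q ns)%:R Z k /\
  0 < v_hat (derived_q q ns)%:R Z k.
Proof.
have hQ : (2 <= derived_q q ns)%N.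
  case: hq => p [e [pp e0 ->]].
  rewrite /derived_q -expnM; apply: gt1_exp; last exact: prime_gt1.
  rewrite muln_gt0 e0 /= big_seq; apply: prodn_cond_gt0 => i hi.
  exact: (allP hns).
have hQ' : (2 : R) <= (derived_q q ns)%:R by rewrite ler_nat.
have zp := @zeta_pos _ _ hQ' _ _ _ _ hZ halpha hbeta.
split; first exact: zp.
rewrite /v_hat big_nat_cond; apply: prodr_gt0 => i /andP[/andP[i1 _] _].
exact: zp.
Qed.
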